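(* Let $n\ge2$, $\gamma\in\,]0,1]$, let $\varphi:\mathbb{R}^{n-1}\to\mathbb{R}$ be Hölder continuous with exponent $\gamma$ and best Hölder constant $\mathrm{Lip}_\gamma\varphi$, and let $\Omega=\{x: x_n<\varphi(\bar x)\}$, $G=\mathbb{R}^n\setminus\overline\Omega$. Let $x\in\mathbb{R}^n$, $r>0$ with $B_1(x,r)\cap G\neq\emptyset$. Let $h\in\mathbb{Z}$ be the minimal integer such that $B_1(x,r)\cap G_h\ne\emptyset$, and let $k\in\mathbb{Z}$ with $k\ge h+3$ and $B_1(x,r)\cap\tilde G_k\ne\emptyset$. Then $$|2^{-(h+3)}-2^{-k}|\le c\,(r+r^\gamma),$$ where $c$ depends only on $\gamma$ and $\mathrm{Lip}_\gamma\varphi$. Moreover, for every $E>0$ and every integer $h_0$ there exists $S>0$ depending only on $\gamma$, $\mathrm{Lip}_\gamma\varphi$, $E$ and $h_0$ such that, whenever $h\ge h_0$, for every $\eta=(\bar\eta,\eta_n)\in\mathbb{R}^n$ with $|\eta|<E$, $$\operatorname{diam}\Bigl(\bigcup_{k=h+3}^\infty\bigl(B_1(x,r)\cap\tilde G_k-(2^{-k/\gamma}\bar\eta,\ 2^{-k}\eta_n)\bigr)\Bigr)\le S(r+r^\gamma).$$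
   Context: Points are $x=(\bar x,x_n)$. $B_1(x,r)=\{y:|\bar x-\bar y|<r,\ |x_n-y_n|<r\}$. $\rho_n(x)=x_n-\varphi(\bar x)$; $G_k=\{x\in G: 2^{-k-1}<\rho_n(x)\le2^{-k}\}$ and $\tilde G_k=G_{k-1}\cup G_k\cup G_{k+1}=\{x\in G:2^{-k-2}<\rho_n(x)\le 2^{-k+1}\}$ for $k\in\mathbb{Z}$. $\operatorname{diam}$ is the Euclidean diameter; $C-v=\{y-v:y\in C\}$. *)

(* Defs.v *)
From HB Require Import structures.
From mathcomp Require Import all_boot all_order all_algebra.
From mathcomp Require Import all_classical all_reals all_analysis.
Set Implicit Arguments. Unset Strict Implicit. Unset Printing Implicit Defensive.
Import Order.TTheory GRing.Theory Num.Theory.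
Import numFieldNormedType.Exports.
Local Open Scope classical_set_scope.
Local Open Scope ring_scope.

(* A point of R^n, n = m+1, is written x = (xbar, x_n) with xbar in R^(n-1). *)
Definition pt (R : realType) (m : nat) := ('rV[R]_m * R)%type.

Definition L3_enorm (R : realType) (m : nat) (v : 'rV[R]_m) : R :=
  Num.sqrt (\sum_(i < m) v ord0 i ^+ 2).

Definition L3_edist (R : realType) (m : nat) (p q : pt R m) : R :=
  Num.sqrt (L3_enorm (p.1 - q.1) ^+ 2 + (p.2 - q.2) ^+ 2).

(* Euclidean diameter (in extended reals; -oo for the empty set). *)
Definition L3_diam (R : realType) (m : nat) (A : set (pt R m)) : \bar R :=
  ereal_sup [set (L3_edist p q)%:E | p in A & q in A].

Definition L3_holder (R : realType) (m : nat) (gamma L : R) (phi : 'rV[R]_m -> R) :=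
  forall a b, `|phi a - phi b| <= L * (L3_enorm (a - b)) `^ gamma.

Definition L3_best_holder_const (R : realType) (m : nat) (gamma L : R)
    (phi : 'rV[R]_m -> R) :=
  L3_holder gamma L phi /\ forall L', L3_holder gamma L' phi -> L <= L'.

Definition L3_B1 (R : realType) (m : nat) (x : pt R m) (r : R) : set (pt R m) :=
  [set y | L3_enorm (x.1 - y.1) < r /\ `|x.2 - y.2| < r].

Definition L3_Omega (R : realType) (m : nat) (phi : 'rV[R]_m -> R) : set (pt R m) :=
  [set x | x.2 < phi x.1].
Definition L3_Gdom (R : realType) (m : nat) (phi : 'rV[R]_m -> R) : set (pt R m) :=
  ~` closure (L3_Omega phi).

Definition L3_rho (R : realType) (m : nat) (phi : 'rV[R]_m -> R) (x : pt R m) : R :=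
  x.2 - phi x.1.

Definition L3_p2 (R : realType) (k : int) : R := (2 : R) `^ (- (k%:~R)).

Definition L3_Gk (R : realType) (m : nat) (phi : 'rV[R]_m -> R) (k : int) : set (pt R m) :=
  L3_Gdom phi `&` [set x | L3_p2 R (k + 1) < L3_rho phi x /\ L3_rho phi x <= L3_p2 R k].

Definition L3_Gtk (R : realType) (m : nat) (phi : 'rV[R]_m -> R) (k : int) : set (pt R m) :=
  L3_Gk phi (k - 1) `|` L3_Gk phi k `|` L3_Gk phi (k + 1).

Definition L3_shift (R : realType) (m : nat) (C : set (pt R m)) (v : pt R m) : set (pt R m) :=
  [set y | C (y.1 + v.1, y.2 + v.2)].

(* Main.v *)
Require Import Defs.
From HB Require Import structures.
From mathcomp Require Import all_boot all_order all_algebra.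
From mathcomp Require Import all_classical all_reals all_analysis.
From mathcomp Require Import ring lra zify.
Import Order.TTheory GRing.Theory Num.Theory.
Import numFieldNormedType.Exports.
Local Open Scope classical_set_scope.
Local Open Scope ring_scope.


Section En.
Context {R : realType} {m : nat}.
Implicit Types u v : 'rV[R]_m.
Definition ss u := \sum_(i < m) u ord0 i ^+ 2.
Lemma ss_ge0 u : 0 <= ss u.
Proof. by apply: sumr_ge0 => i _; rewrite sqr_ge0. Qed.
Lemma en_ge0 u : 0 <= L3_enorm u.
Proof. exact: sqrtr_ge0. Qed.
Lemma en_sq u : L3_enorm u ^+ 2 = ss u.
Proof. by rewrite sqr_sqrtr // ss_ge0. Qed.
Lemma ss0 u : ss u = 0 -> forall i, u ord0 i = 0.
Proof.
move=> /eqP; rewrite psumr_eq0 => [/allP H i|i _]; last by rewrite sqr_ge0.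
by apply/eqP; rewrite -sqrf_eq0; apply/eqP/eqP; apply: (H i); rewrite mem_index_enum.
Qed.
Lemma cs u v : \sum_(i < m) u ord0 i * v ord0 i <= L3_enorm u * L3_enorm v.
Proof.
set A := L3_enorm u; set B := L3_enorm v.
have A0 : 0 <= A := en_ge0 u. have B0 : 0 <= B := en_ge0 v.
have [Az|Ap] := eqVneq A 0.
  have := en_sq u; rewrite -/A Az expr0n /= => /esym/ss0 H.
  by rewrite big1 ?mul0r // => i _; rewrite H mul0r.
have [Bz|Bp] := eqVneq B 0.
  have := en_sq v; rewrite -/B Bz expr0n /= => /esym/ss0 H.
  by rewrite big1 ?mulr0 // => i _; rewrite H mulr0.
have AB : 0 < A * B by rewrite mulr_gt0 // lt_neqAle eq_sym ?Ap ?Bp.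
rewrite -(ler_pM2l AB).
have H : 2 * (A * B) * \sum_(i < m) u ord0 i * v ord0 i
   <= \sum_(i < m) (B ^+ 2 * u ord0 i ^+ 2 + A ^+ 2 * v ord0 i ^+ 2).
  rewrite mulr_sumr; apply: ler_sum => i _.
  have := sqr_ge0 (B * u ord0 i - A * v ord0 i). nra.
move: H; rewrite big_split /= -!mulr_sumr -/(ss u) -/(ss v) -!en_sq -/A -/B.
nra.
Qed.
Lemma ssD u v : ss (u + v) = ss u + 2 * \sum_(i < m) u ord0 i * v ord0 i + ss v.
Proof.
rewrite /ss mulr_sumr -!big_split /=; apply: eq_bigr => i _; rewrite !mxE; ring.
Qed.
Lemma enD u v : L3_enorm (u + v) <= L3_enorm u + L3_enorm v.
Proof.
have h := cs u v.
have hu := en_sq u; have hv := en_sq v.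
have hu0 := en_ge0 u; have hv0 := en_ge0 v.
rewrite -(ger0_norm (addr_ge0 hu0 hv0)) -sqrtr_sqr.
rewrite {1}/L3_enorm ler_sqrt; last by rewrite sqr_ge0.
rewrite -/(ss (u+v)) ssD -hu -hv.
move: h hu0 hv0; set a := L3_enorm u; set b := L3_enorm v; set c := \sum_(i < m) _.
move=> *. nra.
Qed.
Lemma enZ a u : L3_enorm (a *: u) = `|a| * L3_enorm u.
Proof.
rewrite /L3_enorm -sqrtr_sqr -sqrtrM ?sqr_ge0 // mulr_sumr; congr Num.sqrt.
by apply: eq_bigr => i _; rewrite !mxE exprMn.
Qed.
Lemma enN u : L3_enorm (- u) = L3_enorm u.
Proof. by rewrite -scaleN1r enZ normrN normr1 mul1r. Qed.
End En.

Section P2.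
Variable R : realType.
Lemma p2_gt0 k : 0 < L3_p2 R k.
Proof. by apply: powR_gt0. Qed.
Lemma p2_le (j k : int) : j <= k -> L3_p2 R k <= L3_p2 R j.
Proof.
move=> jk; apply: ler_powR; first by lra.
by rewrite lerN2 ler_int.
Qed.
Lemma p2S k : L3_p2 R (k + 1) = L3_p2 R k / 2.
Proof.
rewrite /L3_p2 intrD opprD powRD; last by apply/implyP => _; rewrite pnatr_eq0.
by rewrite powR_inv1 //; lra.
Qed.
Lemma powR_split (P g : R) : 0 < P -> 0 < g ->
  P `^ (g^-1) = P * P `^ (g^-1 - 1).
Proof.
move=> P0 g0.
rewrite -{1}(addrNK 1 (g^-1)) addrC powRD; last by apply/implyP => _; rewrite gt_eqF.
by rewrite powRr1 // ltW.
Qed.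
End P2.
Section Key.
Variables (R : realType) (m : nat) (gamma L : R) (phi : 'rV[R]_m -> R).
Hypothesis g0 : 0 < gamma.
Hypothesis Hh : L3_holder gamma L phi.

Lemma hold_r (x y : pt R m) r : L3_enorm (x.1 - y.1) < r ->
  `|phi x.1 - phi y.1| <= `|L| * r `^ gamma.
Proof.
move=> H; apply: (le_trans (Hh _ _)).
apply: le_trans (ler_wpM2r (powR_ge0 _ _) (ler_norm L)) _.
apply: ler_wpM2l; first exact: normr_ge0.
by apply: ge0_ler_powR; rewrite ?ltW // nnegrE ?en_ge0 // (le_trans (en_ge0 _) (ltW H)).
Qed.

Lemma Gtk_rho (z : pt R m) k : L3_Gtk phi k z -> L3_rho phi z <= L3_p2 R (k - 1).
Proof.
have h1 : L3_p2 R k <= L3_p2 R (k - 1) by apply: p2_le; lia.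
have h2 : L3_p2 R (k + 1) <= L3_p2 R (k - 1) by apply: p2_le; lia.
by case=> [[]|] [_ [_ H]] //; [exact: le_trans h1 | exact: le_trans h2].
Qed.

Lemma key (x y z : pt R m) r h k : (h + 3 <= k)%R ->
  L3_B1 x r y -> L3_Gk phi h y -> L3_B1 x r z -> L3_Gtk phi k z ->
  L3_p2 R (h + 3) < r + `|L| * r `^ gamma.
Proof.
move=> hk [By1 By2] [_ [Gy _]] [Bz1 Bz2] Gz.
have Hz := Gtk_rho _ _ Gz.
have e1 : L3_p2 R (k - 1) <= L3_p2 R (h + 2) by apply: p2_le; lia.
have e2 : L3_p2 R (h + 3) = L3_p2 R (h + 2) / 2.
  by rewrite -p2S; congr L3_p2; lia.
have e3 : L3_p2 R (h + 2) = L3_p2 R (h + 1) / 2.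
  by rewrite -p2S; congr L3_p2; lia.
have hy := hold_r _ _ _ By1. have hz := hold_r _ _ _ Bz1.
move: Gy Hz; rewrite /L3_rho.
have := p2_gt0 R (h + 3).
move: By2 Bz2 hy hz e1 e2 e3.
rewrite !ltr_norml !ler_norml.
move: (L3_p2 R (h + 1)) (L3_p2 R (h + 2)) (L3_p2 R (h + 3)) (L3_p2 R (k - 1)).
move: (phi x.1) (phi y.1) (phi z.1) (`|L| * r `^ gamma) => a b c q P1 P2 P3 Pk.
move=> /andP[? ?] /andP[? ?] /andP[? ?] /andP[? ?] *; lra.
Qed.
End Key.
Lemma edist_le (R : realType) m (p q : pt R m) :
  L3_edist p q <= L3_enorm (p.1 - q.1) + `|p.2 - q.2|.
Proof.
have e0 := en_ge0 (p.1 - q.1).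
rewrite -(ger0_norm (addr_ge0 e0 (normr_ge0 (p.2 - q.2)))) -sqrtr_sqr.
rewrite /L3_edist ler_sqrt; last by rewrite sqr_ge0.
move: (L3_enorm _) e0 (p.2 - q.2) => a a0 b.
have := normr_ge0 b; rewrite -[b ^+ 2]real_normK ?num_real //; nra.
Qed.

Lemma eta_bd (R : realType) m (eta : pt R m) E : L3_edist eta (0, 0) < E ->
  L3_enorm eta.1 < E /\ `|eta.2| < E.
Proof.
rewrite /L3_edist /= !subr0 => H.
have a0 := en_ge0 eta.1.
split; apply: le_lt_trans H.
  rewrite -{1}(ger0_norm a0) -sqrtr_sqr ler_sqrt ?addr_ge0 ?sqr_ge0 //.
  have := sqr_ge0 eta.2; lra.
rewrite -sqrtr_sqr ler_sqrt ?addr_ge0 ?sqr_ge0 // -real_normK ?num_real //.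
have := sqr_ge0 (L3_enorm eta.1); lra.
Qed.

Lemma absdiff_le (R : realType) (a b M : R) : 0 <= a <= M -> 0 <= b <= M ->
  `|a - b| <= M.
Proof. move=> /andP[? ?] /andP[? ?]; rewrite ler_norml; apply/andP; split; lra. Qed.

Arguments edist_le {R m}. Arguments eta_bd {R m eta E}. Arguments absdiff_le {R a b M}.
Arguments p2_le {R j k}. Arguments powR_split {R P g}.
Arguments key {R m gamma L phi} g0 Hh {x y z r h k}.
Lemma enB3 (R : realType) m (u w e : 'rV[R]_m) d :
  L3_enorm (u - w - d *: e) <= L3_enorm u + L3_enorm w + `|d| * L3_enorm e.
Proof.
apply: le_trans (enD _ _) _; rewrite enN enZ lerD2r.
by apply: le_trans (enD _ _) _; rewrite enN.
Qed.

Theorem lemma3p2 (R : realType) (gamma L : R) :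
  0 < gamma -> gamma <= 1 ->
  (exists c : R, forall (m : nat) (phi : 'rV[R]_m -> R) (x : pt R m) (r : R)
       (h k : int),
     (0 < m)%N -> L3_best_holder_const gamma L phi -> 0 < r ->
     L3_B1 x r `&` L3_Gdom phi !=set0 ->
     L3_B1 x r `&` L3_Gk phi h !=set0 ->
     (forall j : int, L3_B1 x r `&` L3_Gk phi j !=set0 -> h <= j) ->
     h + 3 <= k -> L3_B1 x r `&` L3_Gtk phi k !=set0 ->
     `|L3_p2 R (h + 3) - L3_p2 R k| <= c * (r + r `^ gamma))
  /\
  (forall (Ebd : R) (h0 : int), 0 < Ebd ->
     exists S : R, 0 < S /\
     forall (m : nat) (phi : 'rV[R]_m -> R) (x : pt R m) (r : R) (h : int),
     (0 < m)%N -> L3_best_holder_const gamma L phi -> 0 < r ->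
     L3_B1 x r `&` L3_Gdom phi !=set0 ->
     L3_B1 x r `&` L3_Gk phi h !=set0 ->
     (forall j : int, L3_B1 x r `&` L3_Gk phi j !=set0 -> h <= j) ->
     h0 <= h ->
     forall eta : pt R m, @L3_edist R m eta (0, 0) < Ebd ->
     (L3_diam
        (\bigcup_(k in [set k : int | (h + 3 <= k)%R])
           L3_shift (L3_B1 x r `&` L3_Gtk phi k)%classic
             ((((2 : R) `^ (- (k%:~R) / gamma))%R *: eta.1,
               L3_p2 R k * eta.2)%R : pt R m))
      <= (S * (r + r `^ gamma))%R%:E)%E).
Proof.
move=> g0 g1; split.
  exists (1 + `|L|) => m phi x r h k m0 [Hh _] r0 _ [y [By Gy]] _ hk [z [Bz Gz]].
  have K := key g0 Hh hk By Gy Bz Gz.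
  have Pk0 := p2_gt0 R k; have Pkl := p2_le hk.
  have rg := powR_ge0 r gamma; have L0 := normr_ge0 L.
  have D : `|L3_p2 R (h + 3) - L3_p2 R k| <= L3_p2 R (h + 3).
    by apply: absdiff_le; apply/andP; split; rewrite // ltW // p2_gt0.
  apply: le_trans D _.
  move: K; move: (L3_p2 R (h + 3)) => P K; nra.
move=> E h0 E0.
have gi : 0 <= gamma^-1 - 1 by rewrite subr_ge0 invf_ge1.
have gi0 : 0 <= gamma^-1 by rewrite invr_ge0 ltW.
set M' := L3_p2 R (h0 + 3) `^ (gamma^-1 - 1).
have M0 : 0 <= M' := powR_ge0 _ _.
have L0 := normr_ge0 L.
have S0 : 0 <= E * (1 + `|L|) * (M' + 1) 
  by apply: mulr_ge0; [apply: mulr_ge0|]; lra.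
exists (4 + E * (1 + `|L|) * (M' + 1)); split; first lra.
move=> m phi x r h m0 [Hh _] r0 _ [y [By Gy]] _ hh0 eta Heta.
have [He1 He2] := eta_bd Heta.
rewrite /L3_diam; apply/ereal_supP => _ [pa [k /= hk [Ba Ga]] [pb [j /= hj [Bb Gb]] <-]].
rewrite lee_fin.
have K := key g0 Hh hk By Gy Ba Ga.
set P3 := L3_p2 R (h + 3) in K.
have P30 : 0 < P3 := p2_gt0 _ _.
have sE i : (2 : R) `^ (- (i%:~R) / gamma) = L3_p2 R i `^ (gamma^-1).
  by rewrite /L3_p2 -powRrM.
have sB i : h + 3 <= i -> 0 <= (2 : R) `^ (- (i%:~R) / gamma) <= P3 `^ (gamma^-1).
  move=> hi; rewrite powR_ge0 sE /=; apply: ge0_ler_powR => //.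
  - by rewrite nnegrE powR_ge0.
  - by rewrite nnegrE ltW.
  - exact: p2_le hi.
have tB i : h + 3 <= i -> 0 <= L3_p2 R i <= P3.
  by move=> hi; apply/andP; split; [rewrite ltW ?p2_gt0 | exact: p2_le hi].
have Psp := powR_split P30 g0.
have PM : P3 `^ (gamma^-1 - 1) <= M'.
  apply: ge0_ler_powR => //.
  - by rewrite nnegrE ltW.
  - by rewrite nnegrE ltW ?p2_gt0.
  - by apply: (p2_le (j := h0 + 3) (k := h + 3)); rewrite lerD2r.
have ds := absdiff_le (sB _ hk) (sB _ hj).
have dt := absdiff_le (tB _ hk) (tB _ hj).
set sk := (2 : R) `^ (- (k%:~R) / gamma) in Ba ds.
set sj := (2 : R) `^ (- (j%:~R) / gamma) in Bb ds.
set tk := L3_p2 R k in Ba dt. set tj := L3_p2 R j in Bb dt.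
case: Ba => /= Ba1 Ba2; case: Bb => /= Bb1 Bb2.
have ev : pa.1 - pb.1 = (x.1 - (pb.1 + sj *: eta.1)) - (x.1 - (pa.1 + sk *: eta.1))
    - (sk - sj) *: eta.1.
  by apply/rowP => i; rewrite !mxE; ring.
have es : pa.2 - pb.2 = (x.2 - (pb.2 + tj * eta.2)) - (x.2 - (pa.2 + tk * eta.2))
    - (tk - tj) * eta.2 by ring.
apply: le_trans (edist_le pa pb) _; rewrite ev es.
apply: le_trans (lerD (enB3 _ _ _ _ _ _) (le_refl _)) _.
set u2 := x.2 - (pb.2 + tj * eta.2). set w2 := x.2 - (pa.2 + tk * eta.2).
have N2 : `|u2 - w2 - (tk - tj) * eta.2| <= `|u2| + `|w2| + `|tk - tj| * `|eta.2|.
  by rewrite -normrM -(normrN w2) -(normrN ((tk - tj) * eta.2)); apply: le_trans (ler_normD _ _) _; rewrite lerD2r ler_normD.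
apply: le_trans (lerD (le_refl _) N2) _.
have en0 := en_ge0 eta.1. have e20 := normr_ge0 eta.2.
have X1 : `|sk - sj| * L3_enorm eta.1 <= P3 * M' * E.
  apply: ler_pM => //; last exact: ltW.
  by apply: le_trans ds _; rewrite Psp ler_pM2l.
have X2 : `|tk - tj| * `|eta.2| <= P3 * E by apply: ler_pM => //; exact: ltW.
have rg := powR_ge0 r gamma.
have X3 : P3 * (M' + 1) * E <= (1 + `|L|) * (r + r `^ gamma) * (M' + 1) * E.
  have X0 : P3 <= (1 + `|L|) * (r + r `^ gamma).
    have := mulr_ge0 L0 (ltW r0); lra.
  apply: ler_wpM2r; first exact: ltW.
  by apply: ler_wpM2r => //; lra.
move: X1 X2 X3 Ba1 Ba2 Bb1 Bb2; rewrite -/u2 -/w2 => *.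
lra.
Qed.
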